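(* Fix $\tau>0$ and suppose that for every $\lambda\in\Lambda$ the problem $\max_{\pi\in\Pi}\mathcal{L}_\tau(\pi,\lambda)$ has exactly one optimal policy $\pi^*_{\tau,\lambda}$. Then $d_\tau$ is differentiable at every $\lambda\in\Lambda$, and $$\nabla d_\tau(\lambda)=V^{\pi^*_{\tau,\lambda}}(\rho)-c.$$
   Context: Finite MDP with state space $\mathcal S$, action space $\mathcal A$, transition kernel $\mathrm P$, discount $\gamma\in(0,1)$, initial distribution $\rho$, positive finite rewards $r_0,\dots,r_m$. $\Pi$ is the (compact) set of stationary policies. $V_i^\pi(\rho)=\mathbb{E}[\sum_{t\ge0}\gamma^tr_i(s_t,a_t)]$ with $s_0\sim\rho$, $a_t\sim\pi(\cdot\mid s_t)$, $s_{t+1}\sim\mathrm P(\cdot\mid s_t,a_t)$; $V^\pi(\rho)=(V_1^\pi(\rho),\dots,V_m^\pi(\rho))^\top$; $c\in\mathbb{R}^m$. Discounted entropy $\mathcal H(\pi)=-\mathbb{E}[\sum_{t\ge0}\gamma^t\log\pi(a_t\mid s_t)]$ (same dynamics). $\mathcal L_\tau(\pi,\lambda)=V_0^\pi(\rho)+\langle\lambda,V^\pi(\rho)-c\rangle+\tau\mathcal H(\pi)$ for $\lambda\in\mathbb{R}^m$, and $d_\tau(\lambda)=\max_{\pi\in\Pi}\mathcal L_\tau(\pi,\lambda)$. Given $\xi>0$ (the Slater constant: a policy $\pi_\xi$ with $V_i^{\pi_\xi}(\rho)\ge c_i+\xi$ for all $i$), $r_{0,\max}=\max_{s,a}r_0(s,a)$,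 $B_\lambda=\frac{r_{0,\max}+\log|\mathcal A|}{(1-\gamma)\xi}$ and $\Lambda=\{\lambda\in\mathbb{R}^m_+:\|\lambda\|_1\le B_\lambda\}$. *)

(* Defs.v *)
From HB Require Import structures.
From mathcomp Require Import all_boot all_order all_algebra.
From mathcomp Require Import all_classical all_reals all_analysis.
Set Implicit Arguments. Unset Strict Implicit. Unset Printing Implicit Defensive.
Import Order.TTheory GRing.Theory Num.Theory.
Import numFieldNormedType.Exports.
Local Open Scope ring_scope.
Local Open Scope classical_set_scope.

Section MDP.
Variables (R : realType) (S A : finType).

(* A stationary (stochastic) policy pi(a|s) = pi s a. *)
Definition is_policy (pi : S -> A -> R) : Prop :=
  (forall s a, 0 <= pi s a) /\ (forall s, \sum_(a : A) pi s a = 1).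

Definition Policies : set (S -> A -> R) := [set pi | is_policy pi].

(* Distribution of s_t when s_0 ~ rho, a_t ~ pi(.|s_t), s_{t+1} ~ P(.|s_t,a_t). *)
Fixpoint state_dist (P : S -> A -> S -> R) (rho : S -> R)
    (pi : S -> A -> R) (t : nat) : S -> R :=
  match t with
  | O => rho
  | t'.+1 => fun s' => \sum_(s : S) \sum_(a : A)
        state_dist P rho pi t' s * pi s a * P s a s'
  end.

Definition step_expect (P : S -> A -> S -> R) (rho : S -> R)
    (pi : S -> A -> R) (f : S -> A -> R) (t : nat) : R :=
  \sum_(s : S) \sum_(a : A) state_dist P rho pi t s * pi s a * f s a.

(* E[ sum_t gamma^t f(s_t,a_t) ] = sum_t gamma^t E[f(s_t,a_t)] *)
Definition disc_value (P : S -> A -> S -> R) (rho : S -> R) (gamma : R)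
    (pi : S -> A -> R) (f : S -> A -> R) : R :=
  \big[+%R/0%R]_(0 <= t <oo) (gamma ^+ t * step_expect P rho pi f t).

Definition Vr P rho gamma pi (r : S -> A -> R) := disc_value P rho gamma pi r.

Definition entropy P rho gamma (pi : S -> A -> R) : R :=
  - disc_value P rho gamma pi (fun s a => ln (pi s a)).

Definition lagr P rho gamma (r0 : S -> A -> R) (m : nat)
    (r : 'I_m -> S -> A -> R) (c : 'rV[R]_m) (tau : R)
    (pi : S -> A -> R) (lam : 'rV[R]_m) : R :=
  Vr P rho gamma pi r0
  + \sum_(i < m) lam ord0 i * (Vr P rho gamma pi (r i) - c ord0 i)
  + tau * entropy P rho gamma pi.

(* d_tau(lambda) = max_{pi in Pi} L_tau(pi, lambda) (the max is attained) *)
Definition dual P rho gamma r0 m r c tau (lam : 'rV[R]_m) : R :=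
  sup [set lagr P rho gamma r0 r c tau pi lam | pi in Policies].

(* r_{0,max} = max_{s,a} r_0(s,a) (rewards are positive, so starting at 0 is harmless) *)
Definition rmax (r0 : S -> A -> R) : R :=
  \big[Num.max/0]_(s : S) \big[Num.max/0]_(a : A) r0 s a.

Definition Blam (r0 : S -> A -> R) (gamma xi : R) : R :=
  (rmax r0 + ln (#|A|%:R)) / ((1 - gamma) * xi).

Definition LamSet (m : nat) (r0 : S -> A -> R) (gamma xi : R) : set 'rV[R]_m :=
  [set lam | (forall i, 0 <= lam ord0 i) /\
             \sum_(i < m) `|lam ord0 i| <= Blam r0 gamma xi].

End MDP.

(* Main.v *)
Require Import Defs.
From HB Require Import structures.
From mathcomp Require Import all_boot all_order all_algebra.
From mathcomp Require Import all_classical all_reals all_analysis.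
From mathcomp Require Import ring lra.
Import Order.TTheory GRing.Theory Num.Theory.
Import numFieldNormedType.Exports.
Local Open Scope ring_scope.
Local Open Scope classical_set_scope.

Set Implicit Arguments. Unset Strict Implicit. Unset Printing Implicit Defensive.
Section Aux.
Variable R : realType.

Lemma cvg_sumR {T} (F : set_system T) {FF : Filter F} (I : finType)
  (f : I -> T -> R) (a : I -> R) :
  (forall i, f i x @[x --> F] --> a i) ->
  (\sum_i f i x) @[x --> F] --> \sum_i a i.
Proof.
move=> H; apply: cvg_big => //; first exact: add_continuous.
Qed.

Definition linsum m (v : 'I_m -> R) (h : 'rV[R]_m) : R := \sum_i v i * h ord0 i.

Lemma linsum_lin m (v : 'I_m -> R) : linear (linsum v).
Proof.
move=> k x y; rewrite /linsum /=.
transitivity (k * \sum_i v i * x ord0 i + \sum_i v i * y ord0 i); last by [].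
rewrite big_distrr -big_split /=; apply: eq_bigr => i _.
have -> : (k *: x + y) ord0 i = k * x ord0 i + y ord0 i.
  by rewrite [LHS]mxE [X in X + _]mxE.
by rewrite mulrDr mulrCA.
Qed.

HB.instance Definition _ m (v : 'I_m -> R) :=
  GRing.isLinear.Build R 'rV[R]_m R _ (linsum v) (linsum_lin v).

Lemma coord_le_norm m (h : 'rV[R]_m) i : `|h ord0 i| <= `|h|.
Proof.
have /mapP[j Hj ->] : `|h ord0 i| \in [seq `|h x.1 x.2| | x : 'I_1 * 'I_m].
  by apply/mapP; exists (ord0, i) => //=; rewrite mem_enum.
by rewrite [leRHS]/Num.norm /= mx_normrE; apply/bigmax_geP; right => /=; exists j.
Qed.


Lemma linsum_cont m (v : 'I_m -> R) : continuous (linsum v).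
Proof.
move=> h0; apply: (@cvg_sumR _ (nbhs h0) (nbhs_filter h0)) => i.
apply: cvgM; first exact: cvg_cst.
exact: coord_continuous.
Qed.

Lemma linsum_le m (v : 'I_m -> R) h : `|linsum v h| <= (\sum_i `|v i|) * `|h|.
Proof.
rewrite /linsum big_distrl /=; apply: le_trans (ler_norm_sum _ _ _) _.
apply: ler_sum => i _; rewrite normrM; apply: ler_wpM2l => //.
exact: coord_le_norm.
Qed.

Section Danskin.
Variables (T : topologicalType) (m : nat) (K : set T) (F : T -> R)
  (g : 'I_m -> T -> R).

Definition Lf (mu : 'rV[R]_m) x := F x + \sum_i mu ord0 i * g i x.
Definition Df mu := sup [set Lf mu x | x in K].
Definition ctsw (f : T -> R) := forall x, K x -> f @ within K (nbhs x) --> f x.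

Lemma LfD mu h x : Lf (mu + h) x = Lf mu x + linsum (fun i => g i x) h.
Proof.
rewrite /Lf /linsum -addrA -big_split /=; congr (_ + _); apply: eq_bigr => i _.
by rewrite mxE mulrDl [h _ _ * _]mulrC.
Qed.

Lemma danskin (x0 : T) (lam : 'rV[R]_m) :
  compact K -> K x0 -> ctsw F -> (forall i, ctsw (g i)) -> Lf lam x0 = Df lam ->
  (forall x, K x -> Lf lam x = Df lam -> forall i, g i x = g i x0) ->
  differentiable Df lam /\
  forall h, 'd Df lam h = \sum_i g i x0 * h ord0 i.
Proof.
move=> cK Kx0 cF cg Lx0 uniq.
have K0 : K !=set0 by exists x0.
pose G x := `|F x| + \sum_i `|g i x|.
have cG : {within K, continuous G}.
  apply/subspace_continuousP => x Kx; apply: cvgD; first exact: cvg_norm (cF x Kx).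
  by apply: cvg_sumR => i; exact: cvg_norm (cg i x Kx).
have [c Kc Gc] := compact_EVT_max K0 cK cG.
set B := G c.
have BF x : K x -> `|F x| <= B.
  move=> Kx; apply: le_trans (Gc x (mem_set Kx)); rewrite /G lerDl.
  by apply: sumr_ge0.
have Bg x i : K x -> `|g i x| <= B.
  move=> Kx; apply: le_trans (Gc x (mem_set Kx)); rewrite /G.
  apply: (@le_trans _ _ (\sum_j `|g j x|)); last by rewrite lerDr.
  by rewrite (bigD1 i) //= lerDl sumr_ge0.
have hs mu : has_sup [set Lf mu x | x in K].
  split; first by exists (Lf mu x0), x0.
  exists (B + \sum_i `|mu ord0 i| * B) => _ [x Kx <-].
  rewrite /Lf; apply: lerD; first exact: le_trans (ler_norm _) (BF _ Kx).
  apply: ler_sum => i _; apply: le_trans (ler_norm _) _; rewrite normrM.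
  by apply: ler_wpM2l => //; exact: Bg.
have Dub mu x : K x -> Lf mu x <= Df mu.
  by move=> Kx; apply: (sup_upper_bound (hs mu)); exists x.
have Dle mu b : (forall x, K x -> Lf mu x <= b) -> Df mu <= b.
  move=> H; apply: ge_sup; first by exists (Lf mu x0), x0.
  by move=> _ [x Kx <-]; exact: H.
pose phi x := \sum_i `|g i x - g i x0|.
have gap eps : 0 < eps -> exists2 delta, 0 < delta &
    forall x, K x -> Df lam - delta < Lf lam x -> phi x < eps.
  move=> e0.
  pose om x := (Df lam - Lf lam x) + (`|eps - phi x| + (eps - phi x)) / 2.
  have cL : ctsw (Lf lam).
    move=> x Kx; apply: cvgD; first exact: cF.
    by apply: cvg_sumR => i; apply: cvgM; [exact: cvg_cst | exact: cg].
  have cphi : ctsw phi.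
    move=> x Kx; apply: cvg_sumR => i; apply: cvg_norm.
    by apply: cvgB; [exact: cg | exact: cvg_cst].
  have com : {within K, continuous om}.
    apply/subspace_continuousP => x Kx; apply: cvgD.
      by apply: cvgB; [exact: cvg_cst | exact: cL].
    apply: cvgM; last exact: cvg_cst.
    apply: cvgD; first apply: cvg_norm.
      by apply: cvgB; [exact: cvg_cst | exact: cphi].
    by apply: cvgB; [exact: cvg_cst | exact: cphi].
  have [c' Kc' omc] := compact_EVT_min K0 cK com.
  have Kc1 : K c' by exact: set_mem.
  have b0 y : 0 <= (`|eps - y| + (eps - y)) / 2.
    by have := ler_norm (- (eps - y)); rewrite normrN; lra.
  exists (om c').
    case: (eqVneq (Lf lam c') (Df lam)) => hc.
      have ph0 : phi c' = 0.
        by rewrite /phi big1 // => i _; rewrite (uniq c' Kc1 hc i) subrr normr0.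
      by rewrite /om hc ph0 subrr add0r subr0 ger0_norm ?(ltW e0) //; lra.
    have : Lf lam c' < Df lam by rewrite lt_neqAle hc Dub.
    by have := b0 (phi c'); rewrite /om; lra.
  move=> x Kx hx; rewrite ltNge; apply/negP => hph.
  have : (`|eps - phi x| + (eps - phi x)) / 2 = 0.
    by rewrite ler0_norm ?subr_le0 // addNr mul0r.
  by have := omc x (mem_set Kx); move: hx; rewrite /om; lra.
have B0 : 0 <= B by rewrite /B /G addr_ge0 // sumr_ge0.
pose g0 := fun i => g i x0.
have est eps : 0 < eps -> \forall h \near (0 : 'rV[R]_m),
    `|Df (h + lam) - Df lam - linsum g0 h| <= eps * `|h|.
  move=> e0; have [delta d0 Hd] := gap eps e0.
  pose C := \sum_(i < m) (B + B).
  have C0 : 0 <= C by rewrite sumr_ge0 // => i _; rewrite addr_ge0.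
  have r0 : 0 < delta / (C + 1) by rewrite divr_gt0 // ltr_wpDl.
  near=> h.
  have hr : `|h| < delta / (C + 1).
    near: h; exact: (@nbhs0_lt R (matrix_matrix__canonical__normed_module_NormedModule R 1 m) _ r0).
  have hC : C * `|h| < delta.
    rewrite ltr_pdivlMr ?ltr_wpDl // in hr.
    by have := normr_ge0 h; nra.
  have lo : Df lam + linsum g0 h <= Df (h + lam).
    by rewrite [h + lam]addrC -Lx0 /g0 -LfD; apply: Dub.
  have up : Df (h + lam) <= Df lam + linsum g0 h + eps * `|h|.
    rewrite [h + lam]addrC; apply: Dle => x Kx; rewrite LfD.
    have q : linsum (fun i => g i x) h =
        linsum g0 h + linsum (fun i => g i x - g i x0) h.
      rewrite /linsum -big_split; apply: eq_bigr => i _; rewrite /g0 /=; ring.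
    have qb := linsum_le (fun i => g i x - g i x0) h.
    have qn := ler_norm (linsum (fun i => g i x - g i x0) h).
    have Lle := Dub lam x Kx.
    have h0 := normr_ge0 h.
    rewrite q; case: (ltP (Df lam - delta) (Lf lam x)) => hx.
      have := Hd x Kx hx; rewrite /phi in qb *; move=> hp.
      have : (\sum_i `|g i x - g i x0|) * `|h| <= eps * `|h|.
        by apply: ler_wpM2r => //; exact: ltW.
      lra.
    have pC : phi x <= C.
      apply: ler_sum => i _; apply: le_trans (ler_normB _ _) _.
      by apply: lerD; apply: Bg.
    have : phi x * `|h| <= C * `|h| by apply: ler_wpM2r.
    have : 0 <= eps * `|h| by apply: mulr_ge0 => //; exact: ltW.
    rewrite /phi in pC qb *; lra.
  rewrite ler_norml; apply/andP; split; lra.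
have hlit : Df \o shift lam = cst (Df lam) + linsum g0 +o_ (0 : 'rV[R]_m) id.
  apply/eqaddoP => eps e0; have := est eps e0; apply: filterS => h.
  by rewrite /= opprD addrA.
have dE := diff_unique (@linsum_cont m g0) hlit.
split; last by move=> h; rewrite dE.
apply/diff_locallyP; rewrite dE; split => //; exact: linsum_cont.
Unshelve. all: by end_near.
Qed.
End Danskin.
End Aux.

Section Series.
Variables (R : realType) (gamma : R).

Lemma geo_tail (g0 : 0 <= gamma) (gl1 : gamma < 1) N d : \sum_(N <= t < N + d) gamma ^+ t <= gamma ^+ N / (1 - gamma).
Proof.
have g1 : 0 < 1 - gamma by lra.
have E : (\sum_(N <= t < N + d) gamma ^+ t) * (1 - gamma) = gamma ^+ N - gamma ^+ (N + d).
  elim: d => [|d IH]; first by rewrite addn0 big_geq // mul0r subrr.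
  rewrite addnS big_nat_recr /=; last by rewrite leq_addr.
  by rewrite mulrDl IH exprS; ring.
rewrite ler_pdivlMr // E lerBlDr lerDl.
by apply: exprn_ge0; lra.
Qed.

Lemma series_tail (g0 : 0 <= gamma) (gl1 : gamma < 1) (w : nat -> R) M : (forall t, `|w t| <= M) -> forall N,
  `|limn (fun n => \sum_(0 <= t < n) gamma ^+ t * w t)
     - \sum_(0 <= t < N) gamma ^+ t * w t| <= M * gamma ^+ N / (1 - gamma).
Proof.
move=> hw N.
have M0 : 0 <= M := le_trans (normr_ge0 _) (hw 0%N).
have cv : cvgn (fun n => \sum_(0 <= t < n) gamma ^+ t * w t).
  have -> : (fun n => \sum_(0 <= t < n) gamma ^+ t * w t) =
      series (fun t => gamma ^+ t * w t) by rewrite seriesEnat.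
  apply: normed_cvg.
  apply: (@series_le_cvg _ _ (geometric M gamma)).
  - by move=> n; exact: normr_ge0.
  - by move=> n; rewrite /geometric /= mulr_ge0 // exprn_ge0.
  - move=> n /=; rewrite /geometric /= normrM ger0_norm ?exprn_ge0 //.
    by rewrite mulrC ler_wpM2r // exprn_ge0.
  - by apply: is_cvg_geometric_series; rewrite ger0_norm //; lra.
have part n : (N <= n)%N -> `|\sum_(0 <= t < n) gamma ^+ t * w t
     - \sum_(0 <= t < N) gamma ^+ t * w t| <= M * gamma ^+ N / (1 - gamma).
  move=> Nn; rewrite (big_cat_nat (leq0n N) Nn) /= addrAC subrr add0r.
  apply: le_trans (ler_norm_sum _ _ _) _.
  apply: (@le_trans _ _ (\sum_(N <= t < n) M * gamma ^+ t)).
    apply: ler_sum => t _; rewrite normrM ger0_norm ?exprn_ge0 //.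
    by rewrite mulrC ler_wpM2r // exprn_ge0.
  rewrite -big_distrr /= -mulrA ler_wpM2l // -(subnKC Nn).
  exact: geo_tail.
rewrite ler_norml; apply/andP; split.
  rewrite lerBrDr; apply: limr_ge => //; near=> n.
  have := part n; rewrite ler_norml => /(_ _)/andP[]; last by move=> h _; lra.
  by near: n; exact: nbhs_infty_ge.
rewrite lerBlDr; apply: limr_le => //; near=> n.
have := part n; rewrite ler_norml => /(_ _)/andP[]; last by move=> _ h; lra.
by near: n; exact: nbhs_infty_ge.
Unshelve. all: by end_near.
Qed.

Lemma series_cvg (g0 : 0 <= gamma) (gl1 : gamma < 1) (T : Type)
  (Fl : set_system T) {FF : Filter Fl} (w : T -> nat -> R) (w0 : nat -> R) M :
  (forall t, w x t @[x --> Fl] --> w0 t) ->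
  (\forall x \near Fl, forall t, `|w x t| <= M) -> (forall t, `|w0 t| <= M) ->
  limn (fun n => \sum_(0 <= t < n) gamma ^+ t * w x t) @[x --> Fl] -->
  limn (fun n => \sum_(0 <= t < n) gamma ^+ t * w0 t).
Proof.
move=> hcv hb hb0; apply/cvgrPdist_lt => eps e0.
have M0 : 0 <= M := le_trans (normr_ge0 _) (hb0 0%N).
have g1 : 0 < 1 - gamma by lra.
have [N HN] : exists N, M * gamma ^+ N / (1 - gamma) < eps / 3.
  have : geometric (M / (1 - gamma)) gamma @ \oo --> 0.
    by apply: cvg_geometric; rewrite ger0_norm.
  move/cvgrPdist_lt => /(_ (eps / 3)) H.
  have e3 : 0 < eps / 3 by rewrite divr_gt0.
  have [N HN] := filter_ex (H e3); exists N.
  move: HN; rewrite /geometric /= sub0r normrN ger0_norm; last first.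
    by rewrite mulr_ge0 ?exprn_ge0 // divr_ge0 // ltW.
  by rewrite mulrAC.
have fin : \sum_(0 <= t < N) gamma ^+ t * w x t @[x --> Fl] -->
    \sum_(0 <= t < N) gamma ^+ t * w0 t.
  apply: cvg_big => //; first exact: add_continuous.
  by move=> t _; apply: cvgM; [exact: cvg_cst | exact: hcv].
move/cvgrPdist_lt: fin => /(_ (eps / 3)) fin.
have e3 : 0 < eps / 3 by rewrite divr_gt0.
apply: filterS2 (fin e3) hb => x h1 h2.
have t0 := series_tail g0 gl1 hb0 N.
have tx := series_tail g0 gl1 h2 N.
set a := limn _ in t0 *; set b := \sum_(0 <= t < N) _ in t0 h1.
set d := limn _ in tx *; set c := \sum_(0 <= t < N) _ in tx h1.
have := ler_distD b a d; have := ler_distD c b d.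
rewrite (distrC d c) in tx.
lra.
Qed.

End Series.

Section Mdp.
Variables (R : realType) (S A : finType) (P : S -> A -> S -> R) (rho : S -> R).

Lemma sd_prob (P0 : forall s a s', 0 <= P s a s')
  (P1 : forall s a, \sum_(s' : S) P s a s' = 1)
  (rho0 : forall s, 0 <= rho s) (rho1 : \sum_(s : S) rho s = 1) pi :
  is_policy pi -> forall t,
  (forall s, 0 <= state_dist P rho pi t s) /\ \sum_s state_dist P rho pi t s = 1.
Proof.
move=> [pi0 pi1]; elim => [|t [IH0 IH1]] /=; first by split.
split.
  move=> s'; apply: sumr_ge0 => s _; apply: sumr_ge0 => a _.
  by rewrite !mulr_ge0.
rewrite exchange_big /= -[RHS]IH1; apply: eq_bigr => s _; rewrite exchange_big /=.
transitivity (\sum_(a : A) state_dist P rho pi t s * pi s a).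
  by apply: eq_bigr => a _; rewrite -big_distrr /= P1 mulr1.
by rewrite -big_distrr /= pi1 mulr1.
Qed.

Lemma step_bound (P0 : forall s a s', 0 <= P s a s')
  (P1 : forall s a, \sum_(s' : S) P s a s' = 1)
  (rho0 : forall s, 0 <= rho s) (rho1 : \sum_(s : S) rho s = 1) pi f C t :
  is_policy pi -> (forall s a, `|pi s a * f s a| <= C) ->
  `|step_expect P rho pi f t| <= #|A|%:R * C.
Proof.
move=> hp hC; have [d0 d1] := sd_prob P0 P1 rho0 rho1 hp t.
rewrite /step_expect; apply: le_trans (ler_norm_sum _ _ _) _.
apply: (@le_trans _ _ (\sum_s state_dist P rho pi t s * (#|A|%:R * C))); last first.
  by rewrite -big_distrl /= d1 mul1r.
apply: ler_sum => s _; apply: le_trans (ler_norm_sum _ _ _) _.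
have -> : #|A|%:R * C = \sum_(a : A) C by rewrite sumr_const mulr_natl.
rewrite big_distrr /=; apply: ler_sum => a _.
by rewrite -mulrA normrM ger0_norm // ler_wpM2l.
Qed.

Lemma sd_cvg (T : Type) (Fl : set_system T) {FF : Filter Fl}
  (pif : T -> S -> A -> R) (pi0 : S -> A -> R) :
  (forall s a, pif x s a @[x --> Fl] --> pi0 s a) ->
  forall t s, state_dist P rho (pif x) t s @[x --> Fl] --> state_dist P rho pi0 t s.
Proof.
move=> H; elim => [|t IH] s /=; first exact: cvg_cst.
apply: cvg_sumR => s0; apply: cvg_sumR => a.
by apply: cvgM; [apply: cvgM|exact: cvg_cst]; [exact: IH | exact: H].
Qed.

Lemma step_cvg (T : Type) (Fl : set_system T) {FF : Filter Fl}
  (pif : T -> S -> A -> R) (pi0 : S -> A -> R) (f : T -> S -> A -> R)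
  (f0 : S -> A -> R) :
  (forall s a, pif x s a @[x --> Fl] --> pi0 s a) ->
  (forall s a, pif x s a * f x s a @[x --> Fl] --> pi0 s a * f0 s a) ->
  forall t, step_expect P rho (pif x) (f x) t @[x --> Fl] --> step_expect P rho pi0 f0 t.
Proof.
move=> H Hf t.
have E pi g : step_expect P rho pi g t =
    \sum_s \sum_a state_dist P rho pi t s * (pi s a * g s a).
  by apply: eq_bigr => s _; apply: eq_bigr => a _; rewrite mulrA.
rewrite E (eq_cvg _ _ (fun x => E (pif x) (f x))).
apply: cvg_sumR => s; apply: cvg_sumR => a.
by apply: cvgM; [exact: sd_cvg | exact: Hf].
Qed.

End Mdp.

Lemma disc_cvg (R : realType) (S A : finType) (P : S -> A -> S -> R) (rho : S -> R)
  (P0 : forall s a s', 0 <= P s a s')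
  (P1 : forall s a, \sum_(s' : S) P s a s' = 1)
  (rho0 : forall s, 0 <= rho s) (rho1 : \sum_(s : S) rho s = 1)
  (gamma : R) (g0 : 0 <= gamma) (gl1 : gamma < 1)
  (T : Type) (Fl : set_system T) {FF : Filter Fl}
  (pif : T -> S -> A -> R) (pi0 : S -> A -> R) (f : T -> S -> A -> R)
  (f0 : S -> A -> R) C :
  (forall s a, pif x s a @[x --> Fl] --> pi0 s a) ->
  (forall s a, pif x s a * f x s a @[x --> Fl] --> pi0 s a * f0 s a) ->
  (\forall x \near Fl, is_policy (pif x) /\ forall s a, `|pif x s a * f x s a| <= C) ->
  is_policy pi0 -> (forall s a, `|pi0 s a * f0 s a| <= C) ->
  disc_value P rho gamma (pif x) (f x) @[x --> Fl] --> disc_value P rho gamma pi0 f0.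
Proof.
move=> H Hf hb hp0 hC0; rewrite /disc_value.
apply: (@series_cvg _ _ g0 gl1 _ _ _ _ _ (#|A|%:R * C)).
- exact: step_cvg.
- by apply: filterS hb => x [hp hC] t; exact: step_bound.
- by move=> t; exact: step_bound.
Qed.

Lemma xlnx_bound (R : realType) (x : R) : 0 <= x <= 1 -> `|x * ln x| <= 1.
Proof.
case/andP => x0 x1; have [->|xp] := eqVneq x 0; first by rewrite mul0r normr0.
have xpos : 0 < x by rewrite lt_neqAle eq_sym xp.
have lx : ln x <= 0 := ln_le0 x1.
rewrite ler0_norm; last by rewrite mulr_ge0_le0.
have h : - ln x < x^-1 by rewrite -lnV ?posrE // ln_sublinear ?invr_gt0.
rewrite -(ltr_pM2l xpos) mulfV ?gt_eqF // in h.
by rewrite -mulrN ltW.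
Qed.

Lemma xlnx_cont (R : realType) (x0 : R) : 0 <= x0 ->
  {for x0, continuous (fun y : R => y * ln y)}.
Proof.
rewrite le_eqVlt => /orP [/eqP <- | x0p]; last first.
  by apply: cvgM; [exact: cvg_id | exact: continuous_ln].
apply/cvgrPdist_lt => eps e0.
pose del := expR (- (2 / eps)).
have d0 : 0 < del := expR_gt0 _.
near=> y.
have hy : `|y| < del by near: y; exact: (@nbhs0_lt R R^o _ d0).
rewrite mul0r sub0r normrN.
have [yle|ygt] := leP y 0; first by rewrite ln0 // mulr0 normr0 .
rewrite gtr0_norm // in hy.
have lu : ln y < - (2 / eps) by rewrite -ltr_expR lnK ?posrE.
set u := - ln y.
have hu : 2 / eps < u by rewrite /u ltrNr.
have u0 : 0 < u by apply: lt_trans hu; rewrite divr_gt0.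
have ye : y = expR (- u) by rewrite /u opprK lnK ?posrE.
have E := @expR_ge1Dxn R u 1 (ltW u0).
rewrite /= in E.
have h1 : 2 < eps * u by rewrite mulrC -(ltr_pdivrMr _ _ e0).
have -> : y * ln y = - (expR (- u) * u) by rewrite {1}ye /u opprK mulrN opprK.
rewrite normrN ger0_norm ?mulr_ge0 ?expR_ge0 ?ltW //.
rewrite expRN mulrC ltr_pdivrMr ?expR_gt0 //.
move: E; rewrite (_ : (1.+1)`!%:R = 2 :> R) //; nra.
Unshelve. all: by end_near.
Qed.

Lemma pol_le1 (R : realType) (S A : finType) (pi : S -> A -> R) s a :
  is_policy pi -> pi s a <= 1.
Proof.
move=> [p0 p1]; rewrite -(p1 s) (bigD1 a) //= lerDl.
by apply: sumr_ge0.
Qed.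

Unset Implicit Arguments.
Theorem proposition1 (R : realType) (S A : finType) (m : nat)
  (P : S -> A -> S -> R) (rho : S -> R) (gamma : R)
  (r0 : S -> A -> R) (r : 'I_m -> S -> A -> R) (c : 'rV[R]_m)
  (xi tau : R) :
  (* finite MDP data *)
  (forall s a s', 0 <= P s a s') ->
  (forall s a, \sum_(s' : S) P s a s' = 1) ->
  (forall s, 0 <= rho s) -> \sum_(s : S) rho s = 1 ->
  0 < gamma < 1 ->
  (forall s a, 0 < r0 s a) -> (forall i s a, 0 < r i s a) ->
  (* Slater condition with constant xi *)
  0 < xi ->
  (exists2 pixi, Policies pixi &
     forall i, Vr P rho gamma pixi (r i) >= c ord0 i + xi) ->
  0 < tau ->
  (* uniqueness of the optimal policy for every lambda in Lambda *)
  (forall lam, LamSet r0 gamma xi lam ->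
     exists pistar, Policies pistar /\
       lagr P rho gamma r0 r c tau pistar lam = dual P rho gamma r0 r c tau lam /\
       forall pi, Policies pi ->
         lagr P rho gamma r0 r c tau pi lam = dual P rho gamma r0 r c tau lam ->
         pi = pistar) ->
  forall lam, LamSet r0 gamma xi lam ->
    differentiable (dual P rho gamma r0 r c tau) lam /\
    forall pistar, Policies pistar ->
      lagr P rho gamma r0 r c tau pistar lam = dual P rho gamma r0 r c tau lam ->
      forall h : 'rV[R]_m,
        'd (dual P rho gamma r0 r c tau) lam h =
        \sum_(i < m) (Vr P rho gamma pistar (r i) - c ord0 i) * h ord0 i.
Proof.
move=> P0 P1 rho0 rho1 /andP[gp gl1] _ _ _ _ _ Huniq lam Hlam.
have g0 : 0 <= gamma by exact: ltW.
have [p0 [Pp0 [Lp0 Up0]]] := Huniq lam Hlam.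
pose n := #|{: S * A}|.
pose enc (v : 'rV[R]_n) : S -> A -> R := fun s a => v ord0 (enum_rank (s, a)).
pose dec (pi : S -> A -> R) : 'rV[R]_n := \row_i pi (enum_val i).1 (enum_val i).2.
have encK pi : enc (dec pi) = pi.
  by apply/funext => s; apply/funext => a; rewrite /enc /dec mxE enum_rankK.
pose K := [set v : 'rV[R]_n | is_policy (enc v)].
pose F v := Vr P rho gamma (enc v) r0 + tau * entropy P rho gamma (enc v).
pose g i v := Vr P rho gamma (enc v) (r i) - c ord0 i.
have LfE mu v : Lf F g mu v = lagr P rho gamma r0 r c tau (enc v) mu.
  by rewrite /Lf /lagr /F /g addrAC.
have DfE : Df K F g = dual P rho gamma r0 r c tau.
  apply/funext => mu; rewrite /Df /dual; congr sup.
  apply/seteqP; split => _ [x Hx <-].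
    by exists (enc x) => //; rewrite LfE.
  by exists (dec x); [rewrite /K /= encK | rewrite LfE encK].
have cK : compact K.
  pose box := [set v : 'rV[R]_n | forall i, `[(0:R), 1]%classic (v ord0 i)].
  have cbox : compact box.
    by apply: (@rV_compact _ _ (fun=> `[(0:R), 1]%classic)) => i; exact: segment_compact.
  pose C := \bigcap_(s in [set: S])
     ((fun v : 'rV[R]_n => \sum_(a : A) v ord0 (enum_rank (s, a))) @^-1` [set 1]).
  have cC : closed C.
    apply: closed_bigI => s _; apply: preimage_closed; last exact: closed_eq.
    move=> v _; apply: (@cvg_sumR R _ (nbhs v) (nbhs_filter v)) => a.
    exact: coord_continuous.
  have -> : K = box `&` C.
    apply/seteqP; split => v.
      move=> [pv1 pv2]; split.
        move=> i /=; rewrite in_itv /=.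
        have := pv1 (enum_val i).1 (enum_val i).2.
        have := @pol_le1 _ _ _ _ (enum_val i).1 (enum_val i).2 (conj pv1 pv2).
        by rewrite /enc -surjective_pairing enum_valK => -> ->.
      by move=> s _; exact: pv2.
    move=> [hb hc]; split.
      by move=> s a; have := hb (enum_rank (s, a)); rewrite /= in_itv /= => /andP[].
    by move=> s; exact: hc.
  exact: compact_closedI.
have Hpi x s a : enc v s a @[v --> within K (nbhs x)] --> enc x s a.
  by apply: cvg_within_filter; exact: coord_continuous.
have nK (x : 'rV[R]_n) : within K (nbhs x) K.
  exact: (@withinT _ (nbhs x) K (nbhs_filter x)).
have Vcv (f : S -> A -> R) x : K x ->
    Vr P rho gamma (enc v) f @[v --> within K (nbhs x)] --> Vr P rho gamma (enc x) f.
  move=> Kx; pose C := \sum_s \sum_a `|f s a|.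
  have Cb pi s a : is_policy pi -> `|pi s a * f s a| <= C.
    move=> hp; rewrite normrM; apply: (@le_trans _ _ `|f s a|).
      rewrite ger0_norm; last by case: hp.
      by rewrite ler_piMl // pol_le1.
    apply: (@le_trans _ _ (\sum_a `|f s a|)).
      by rewrite (bigD1 a) //= lerDl sumr_ge0.
    by rewrite /C (bigD1 s) //= lerDl sumr_ge0 // => s' _; rewrite sumr_ge0.
  apply: (@disc_cvg _ _ _ _ _ P0 P1 rho0 rho1 _ g0 gl1 _ _ _ _ _ (fun=> f) f C).
  - exact: Hpi.
  - by move=> s a; apply: cvgM; [exact: Hpi | exact: cvg_cst].
  - by apply: filterS (nK x) => v Kv; split => // s a; exact: Cb.
  - exact: Kx.
  - by move=> s a; exact: Cb.
have Hcv x : K x ->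
    entropy P rho gamma (enc v) @[v --> within K (nbhs x)] --> entropy P rho gamma (enc x).
  move=> Kx; apply: cvgN.
  have Cb pi s a : is_policy pi -> `|pi s a * ln (pi s a)| <= 1.
    by move=> hp; apply: xlnx_bound; rewrite pol_le1 // andbT; case: hp.
  apply: (@disc_cvg _ _ _ _ _ P0 P1 rho0 rho1 _ g0 gl1 _ _ _ _ _
     (fun v s a => ln (enc v s a)) (fun s a => ln (enc x s a)) 1).
  - exact: Hpi.
  - move=> s a.
    have := @continuous_cvg _ _ _ _ _ (fun v => enc v s a) (fun y : R => y * ln y) _
      (xlnx_cont (proj1 Kx s a)) (Hpi x s a).
    by move=> H; apply: H; exact: within_filter.
  - by apply: filterS (nK x) => v Kv; split => // s a; exact: Cb.
  - exact: Kx.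
  - by move=> s a; exact: Cb.
have cF : ctsw K F.
  move=> x Kx; apply: cvgD; first exact: Vcv.
  by apply: cvgM; [exact: cvg_cst | exact: Hcv].
have cg i : ctsw K (g i).
  by move=> x Kx; apply: cvgB; [exact: Vcv | exact: cvg_cst].
have Kx0 : K (dec p0) by rewrite /K /= encK.
have Lx0 : Lf F g lam (dec p0) = Df K F g lam by rewrite LfE encK DfE.
have uq x : K x -> Lf F g lam x = Df K F g lam -> forall i, g i x = g i (dec p0).
  by move=> Kx; rewrite LfE DfE => /(Up0 _ Kx) ex i; rewrite /g ex encK.
have [dD dDE] := @danskin R _ m K F g (dec p0) lam cK Kx0 cF cg Lx0 uq.
rewrite -DfE; split => // pistar Ppi Lpi h.
rewrite DfE in Lpi; rewrite (Up0 _ Ppi Lpi) dDE.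
by apply: eq_bigr => i _; rewrite /g encK.
Qed.
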